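(* Let $h$ be a hospital and define $\mathrm{Ch}_h:2^{X_h}\to2^{X_h}$ as follows: given $X'\subseteq X_h$, sort $X'$ in non-increasing order of $f_h(x)/x_W$ (ties broken by a fixed order) as $x^{(1)},\dots,x^{(|X'|)}$; start with $Y=\emptyset$ and for $i=1,\dots,|X'|$, add $x^{(i)}$ to $Y$ if $w_h(Y)<B_h$; return $Y$. Then $\mathrm{Ch}_h$ satisfies SUB, IRC and COM.
   Context: Hospital $h$ has a finite set $X_h$ of contracts $x$ with wages $x_W$, $0<x_W\le B_h$, where $B_h>0$ is its budget, and an additive utility $f_h$ with $f_h(x)>0$, $f_h(Y)=\sum_{x\in Y}f_h(x)$. $w_h(Y)=\sum_{x\in Y}x_W$. For $\mathrm{Ch}_h$ with $\mathrm{Ch}_h(Y)\subseteq Y$: SUB means for all $Y''\subseteq Y'\subseteq X_h$, $Y''\setminus\mathrm{Ch}_h(Y'')\subseteq Y'\setminus\mathrm{Ch}_h(Y')$; IRC means for $Y'\subseteq X_h$, $Y''\subseteq X_h\setminus Y'$, if $\mathrm{Ch}_h(Y'\cup Y'')\subseteq Y'$ then $\mathrm{Ch}_h(Y')=\mathrm{Ch}_h(Y'\cup Y'')$; COM means for all $Y''\subseteq Y'\subseteq X_h$ with $w_h(Y'')\le\max\{B_h,w_h(\mathrm{Ch}_h(Y'))\}$, $f_h(\mathrm{Ch}_h(Y'))\ge f_h(Y'')$. *)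

(* Defs.v *)
From HB Require Import structures.
From mathcomp Require Import all_boot all_order all_algebra.
Set Implicit Arguments. Unset Strict Implicit. Unset Printing Implicit Defensive.
Import Order.TTheory GRing.Theory Num.Theory.
Local Open Scope ring_scope.

(* A hospital h: its contract set X_h is the finite type T; wages w : T -> R,
   budget B, additive utility with per-contract values f : T -> R,
   tie-breaking fixed order given by an injective rank tb : T -> nat. *)
Section Hospital.
Variables (R : realFieldType) (T : finType).

Definition setsum (g : T -> R) (Y : {set T}) : R := \sum_(x in Y) g x.

Variables (f w : T -> R) (B : R) (tb : T -> nat).

Definition prio : rel T := fun x y =>
  (f y / w y < f x / w x) || ((f x / w x == f y / w y) && (tb x <= tb y)%N).

Definition sorted_contracts (X' : {set T}) : seq T := sort prio (enum X').

Definition greedy_step (Y : {set T}) (x : T) : {set T} :=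
  if setsum w Y < B then x |: Y else Y.

Definition Ch (X' : {set T}) : {set T} :=
  foldl greedy_step set0 (sorted_contracts X').

End Hospital.

Definition SUB (T : finType) (C : {set T} -> {set T}) : Prop :=
  forall Y'' Y' : {set T}, Y'' \subset Y' -> Y'' :\: C Y'' \subset Y' :\: C Y'.

Definition IRC (T : finType) (C : {set T} -> {set T}) : Prop :=
  forall Y' Y'' : {set T}, [disjoint Y' & Y''] ->
    C (Y' :|: Y'') \subset Y' -> C Y' = C (Y' :|: Y'').

Definition COM (R : realFieldType) (T : finType) (f w : T -> R) (B : R)
  (C : {set T} -> {set T}) : Prop :=
  forall Y'' Y' : {set T}, Y'' \subset Y' ->
    setsum w Y'' <= Num.max B (setsum w (C Y')) ->
    setsum f Y'' <= setsum f (C Y').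

(* Main.v *)
Require Import Defs.
From HB Require Import structures.
From mathcomp Require Import all_boot all_order all_algebra.
Import Order.TTheory GRing.Theory Num.Theory.
Local Open Scope ring_scope.

Section Aux.
Variables (R : realFieldType) (T : finType).

Lemma setsum_sub (g : T -> R) (A C : {set T}) :
  (forall x, 0 <= g x) -> A \subset C -> setsum g A <= setsum g C.
Proof.
move=> g0 sAC; rewrite /setsum [X in _ <= X](big_setID A) /= (setIidPr sAC) lerDl.
by apply: sumr_ge0 => i _.
Qed.

Lemma setsum_split (g : T -> R) (A C : {set T}) :
  setsum g A = setsum g (A :&: C) + setsum g (A :\: C).
Proof. by rewrite /setsum (big_setID C). Qed.

Variables (w : T -> R) (B : R).
Hypothesis B0 : 0 < B.
Hypothesis w0 : forall x, 0 < w x.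

Lemma fold_inv (s : seq T) : uniq s ->
  let S := foldl (greedy_step w B) set0 s in
  [/\ S \subset [set x in s], (setsum w S < B -> S = [set x in s]) &
   forall x, (x \in S) = (x \in s) && (setsum w [set y in take (index x s) s] < B)].
Proof.
elim/last_ind: s => [|s x IH] /=.
  move=> _; split; first by rewrite sub0set.
  - by move=> _; apply/setP => y; rewrite !inE.
  - by move=> y; rewrite !inE.
rewrite rcons_uniq => /andP [xs us].
have [sub1 eq1 ch1] := IH us.
set S' := foldl _ _ s in sub1 eq1 ch1 *.
rewrite foldl_rcons -/S'.
have -> : greedy_step w B S' x = if setsum w S' < B then x |: S' else S' by [].
move=> /=.
have Hy : forall y, y \in s ->
   [set z in take (index y (rcons s x)) (rcons s x)] = [set z in take (index y s) s].
  move=> y ys; rewrite -cats1 index_cat ys takel_cat //.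
  by rewrite -ltnS ltnS index_size.
have Hx : [set z in take (index x (rcons s x)) (rcons s x)] = [set z in s].
  by rewrite -cats1 index_cat (negbTE xs) /= eqxx addn0 take_size_cat.
have setr : [set z in rcons s x] = x |: [set z in s].
  by apply/setP => z; rewrite !inE mem_rcons inE.
case: ifP => hlt.
  have e := eq1 hlt.
  split.
  - by rewrite setr e.
  - by rewrite setr e.
  move=> y; rewrite e !inE mem_rcons inE.
  case: (eqVneq y x) => [->|ne] /=; first by rewrite Hx -e hlt.
  case ys: (y \in s) => //=.
  by rewrite Hy //; move: (ch1 y); rewrite e inE ys.
split.
- by apply: (subset_trans sub1); apply/subsetP => z; rewrite !inE mem_rcons inE orbC => ->.
- by rewrite hlt.
move=> y; rewrite mem_rcons inE.
case: (eqVneq y x) => [->|ne] /=.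
  rewrite Hx /=.
  have -> : (x \in S') = false.
    by apply/negbTE; apply: contra xs => /(subsetP sub1); rewrite inE.
  apply/esym/negbTE; rewrite -leNgt.
  apply: (le_trans _ (setsum_sub _ _ _ _ sub1)).
  - by rewrite leNgt hlt.
  - by move=> z; apply: ltW.
case ys: (y \in s); last by rewrite ch1 ys.
by rewrite Hy // ch1 ys.
Qed.
End Aux.

Section Ord.
Variables (R : realFieldType) (T : finType) (f w : T -> R) (tb : T -> nat).
Hypothesis tbi : injective tb.
Local Notation pr := (prio f w tb).
Local Notation rt x := (f x / w x).

Lemma prio_total : total pr.
Proof.
move=> x y; rewrite /prio.
case: (ltgtP (rt x) (rt y)) => _ //=.
exact: leq_total.
Qed.

Lemma prio_trans : transitive pr.
Proof.
move=> y x z; rewrite /prio.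
case/orP => [h1|/andP[/eqP e1 t1]]; case/orP => [h2|/andP[/eqP e2 t2]].
- by rewrite (lt_trans h2 h1).
- by rewrite -e2 h1.
- by rewrite e1 h2.
- by rewrite e1 e2 eqxx (leq_trans t1 t2) orbT.
Qed.

Lemma prio_anti x y : pr x y -> pr y x -> x = y.
Proof.
rewrite /prio.
case/orP => [h1|/andP[/eqP e1 t1]]; case/orP => [h2|/andP[/eqP e2 t2]].
- by move: (lt_trans h1 h2); rewrite ltxx.
- by move: h1; rewrite e2 ltxx.
- by move: h2; rewrite e1 ltxx.
- by apply: tbi; apply/eqP; rewrite eqn_leq t1 t2.
Qed.

Lemma prio_ratio y z : pr y z -> rt z <= rt y.
Proof. by rewrite /prio => /orP [/ltW //|/andP[/eqP -> _]]. Qed.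

Definition ltp y x := pr y x && (y != x).
Definition P (X : {set T}) x := [set y in X | ltp y x].

Lemma take_set (X : {set T}) x : x \in X ->
  let s := sort pr (enum X) in
  [set y in take (index x s) s] = P X x.
Proof.
move=> xX s.
have ss : sorted pr s by apply: sort_sorted; exact: prio_total.
have us : uniq s by rewrite sort_uniq enum_uniq.
have ms : forall y, (y \in s) = (y \in X) by move=> y; rewrite mem_sort mem_enum.
have xs : x \in s by rewrite ms.
apply/setP => y; rewrite !inE /ltp.
case ys: (y \in s); last first.
  by rewrite -ms ys; apply/negbTE; apply: contraFN ys; apply: mem_take.
rewrite -ms ys /= in_take //.
have iy : (index y s < size s)%N by rewrite index_mem.
have ix : (index x s < size s)%N by rewrite index_mem.
apply/idP/idP.
  move=> lt_yx.
  have := sorted_ltn_nth prio_trans y ss _ _ iy ix lt_yx.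
  rewrite !nth_index // => ->; apply/eqP => eyx.
  by move: lt_yx; rewrite eyx ltnn.
case/andP => pyx nyx.
case: (ltngtP (index y s) (index x s)) => // h.
  have := sorted_ltn_nth prio_trans y ss _ _ ix iy h.
  rewrite !nth_index // => pxy.
  by move: nyx; rewrite (prio_anti _ _ pyx pxy) eqxx.
by move: nyx; rewrite -(nth_index y ys) h nth_index // eqxx.
Qed.

Variables (B : R).
Hypothesis B0 : 0 < B.
Hypothesis w0 : forall x, 0 < w x.

Lemma Ch_char (X : {set T}) (x : T) :
  (x \in Ch f w B tb X) = (x \in X) && (setsum w (P X x) < B).
Proof.
rewrite /Ch /sorted_contracts.
have us : uniq (sort pr (enum X)) by rewrite sort_uniq enum_uniq.
have [_ _ ch] := fold_inv _ _ w B w0 _ us.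
rewrite ch mem_sort mem_enum.
case xX: (x \in X) => //=.
by rewrite take_set.
Qed.

Lemma Ch_sub (X : {set T}) : Ch f w B tb X \subset X.
Proof. by apply/subsetP => x; rewrite Ch_char => /andP[]. Qed.

Lemma Ch_full (X : {set T}) : setsum w (Ch f w B tb X) < B -> Ch f w B tb X = X.
Proof.
rewrite /Ch /sorted_contracts.
have us : uniq (sort pr (enum X)) by rewrite sort_uniq enum_uniq.
have [_ e _] := fold_inv _ _ w B w0 _ us.
move=> h; rewrite (e h); apply/setP => y; by rewrite inE mem_sort mem_enum.
Qed.

Lemma Ch_before (X : {set T}) (x : T) : x \in X -> x \notin Ch f w B tb X ->
  Ch f w B tb X \subset P X x.
Proof.
move=> xX xC; apply/subsetP => y yC.
have yX : y \in X by move: yC; rewrite Ch_char => /andP[].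
have nyx : y != x by apply: contraNneq xC => <-.
rewrite inE yX /ltp nyx andbT.
case: (boolP (pr y x)) => // npyx.
have pxy : pr x y by move: (prio_total x y); rewrite (negbTE npyx) orbF.
move: xC; rewrite Ch_char xX /= -leNgt => hx.
move: yC; rewrite Ch_char yX /= => hy.
have : setsum w (P X x) <= setsum w (P X y).
  apply: setsum_sub; first by move=> z; apply: ltW.
  apply/subsetP => z; rewrite !inE /ltp => /andP[-> /andP[pzx nzx]] /=.
  rewrite (prio_trans _ _ _ pzx pxy) /=; apply/eqP => ezy.
  by move: nyx; rewrite (prio_anti _ _ pxy); [rewrite eqxx | rewrite -ezy].
move=> h; move: (le_lt_trans hx (le_lt_trans h hy)); by rewrite ltxx.
Qed.

End Ord.

Theorem lemma3 (R : realFieldType) (T : finType) (f w : T -> R) (B : R)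
  (tb : T -> nat) :
  0 < B ->
  (forall x, 0 < w x) -> (forall x, w x <= B) ->
  (forall x, 0 < f x) ->
  injective tb ->
  let C := Ch f w B tb in
  [/\ (forall Y : {set T}, C Y \subset Y), SUB C, IRC C & COM f w B C].
Proof.
move=> B0 w0 wB f0 tbi C.
have chr := Ch_char _ _ f w tb tbi B w0.
have bef := Ch_before _ _ f w tb tbi B w0.
have full := Ch_full _ _ f w tb B w0.
have wge : forall x, 0 <= w x by move=> x; apply: ltW.
have fge : forall x, 0 <= f x by move=> x; apply: ltW.
have Pmono : forall (X Y : {set T}) x, X \subset Y -> P _ _ f w tb X x \subset P _ _ f w tb Y x.
  move=> X Y x sXY; apply/subsetP => y; rewrite !inE => /andP[yX ->].
  by rewrite (subsetP sXY _ yX).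
split.
- exact: Ch_sub _ _ f w tb tbi B w0.
- move=> Y2 Y1 sub; apply/subsetP => x; rewrite !inE !chr => /andP [nC xY2].
  rewrite (subsetP sub _ xY2) andbT /= -leNgt.
  move: nC; rewrite xY2 /= -leNgt => h.
  apply: (le_trans h); apply: setsum_sub => //; exact: Pmono.
- move=> Y1 Y2 _ hsub; set X := Y1 :|: Y2 in hsub *.
  have sY1X : Y1 \subset X by apply: subsetUl.
  apply/setP => x; apply/idP/idP.
  + move=> xC1.
    have xY1 : x \in Y1 by move: xC1; rewrite chr => /andP[].
    apply/negPn/negP => xnC.
    have xX : x \in X by rewrite (subsetP sY1X).
    have h := bef X x xX xnC.
    have hB : B <= setsum w (C X).
      rewrite leNgt; apply/negP => /full e; move: xnC; rewrite /C e xX.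
      by [].
    have : C X \subset P _ _ f w tb Y1 x.
      apply/subsetP => y yC; move: (subsetP h y yC); rewrite !inE => /andP[_ ->].
      by rewrite (subsetP hsub).
    move=> /(setsum_sub _ _ w _ _ wge) h2.
    by move: xC1; rewrite chr xY1 /= ltNge (le_trans hB h2).
  + move=> xCX; have xY1 := subsetP hsub x xCX.
    rewrite chr xY1 /=; move: xCX; rewrite chr => /andP[_ h].
    apply: le_lt_trans h; apply: setsum_sub => //; exact: Pmono.
- move=> Y2 Y1 sub hw; set Cc := C Y1 in hw *.
  case: (boolP (setsum w Cc < B)) => hlt.
    rewrite /Cc /C (full _ hlt); exact: setsum_sub.
  rewrite -leNgt in hlt.
  rewrite max_r // in hw.
  set D := Y2 :\: Cc; set E := Cc :\: Y2.
  have sp : forall g : T -> R, setsum g Y2 = setsum g (Y2 :&: Cc) + setsum g D.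
    by move=> g; rewrite (setsum_split _ _ g Y2 Cc).
  have sc : forall g : T -> R, setsum g Cc = setsum g (Y2 :&: Cc) + setsum g E.
    by move=> g; rewrite (setsum_split _ _ g Cc Y2) setIC.
  have wDE : setsum w D <= setsum w E by move: hw; rewrite sp sc lerD2l.
  rewrite sp sc lerD2l.
  have key : forall y z, y \in E -> z \in D -> f z * w y <= f y * w z.
    move=> y z; rewrite !inE => /andP[_ yC] /andP[znC zY2].
    have zY1 := subsetP sub z zY2.
    have := subsetP (bef Y1 z zY1 znC) y yC.
    rewrite inE => /andP[_ /andP[pyz _]].
    have h := prio_ratio _ _ f w tb _ _ pyz.
    by rewrite ler_pdivrMr // mulrAC ler_pdivlMr // in h.
  have dbl : setsum f D * setsum w E <= setsum f E * setsum w D.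
    rewrite /setsum mulr_suml mulrC mulr_suml.
    apply: ler_sum => z zD; rewrite mulr_sumr mulrC mulr_suml.
    by apply: ler_sum => y yE; apply: key.
  have fE0 : 0 <= setsum f E by apply: sumr_ge0.
  have dbl2 : setsum f D * setsum w E <= setsum f E * setsum w E.
    by apply: (le_trans dbl); rewrite ler_wpM2l.
  case: (set_0Vmem D) => [-> | [z zD]].
    by rewrite /setsum big_set0.
  have wDp : 0 < setsum w D.
    apply: (lt_le_trans (w0 z)); have <- : setsum w [set z] = w z by rewrite /setsum big_set1.
    by apply: setsum_sub => //; rewrite sub1set.
  have wEp : 0 < setsum w E by apply: lt_le_trans wDE.
  by rewrite ler_pM2r in dbl2.
Qed.
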